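(* Let $(\Re,\oplus,\circ)$ be a commutative Krasner hyperring with identity $1\neq0$, let $\phi$ be a hyperideal reduction and $\delta$ a hyperideal expansion on $L(\Re)$, and let $N$ be a proper hyperideal of $\Re$. Then the following are equivalent: (i) $N$ is a $\phi$-$\delta$-primary hyperideal; (ii) for each $a\in\Re-\delta(N)$, $(N:a)=N\cup(\phi(N):a)$; (iii) for each $a\in\Re-\delta(N)$, $(N:a)=N$ or $(N:a)=(\phi(N):a)$; (iv) for all hyperideals $K,L$ of $\Re$, $K\circ L\subseteq N$ and $K\circ L\not\subseteq\phi(N)$ imply $K\subseteq N$ or $L\subseteq\delta(N)$; (v) for each hyperideal $M$ of $\Re$ with $M\not\subseteq\delta(N)$, $(N:M)=N$ or $(N:M)=(\phi(N):M)$.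
   Context: A commutative Krasner hyperring with identity is $(\Re,\oplus,\circ)$ where $(\Re,\oplus)$ is a canonical hypergroup (associative commutative hyperoperation, scalar zero $0$ with $a\oplus0=\{a\}$, unique inverses $-a$ with $0\in a\oplus(-a)$, and $c\in a\oplus b\Rightarrow b\in c\oplus(-a),\ a\in c\oplus(-b)$), $(\Re,\circ)$ is a commutative semigroup with identity $1\ne0$ and $a\circ0=0$, and $\circ$ distributes over $\oplus$. Hyperideals: nonempty $N$ with $a\oplus(-b)\subseteq N$, $r\circ a\in N$ for $a,b\in N$, $r\in\Re$; $L(\Re)$ is the set of hyperideals. A hyperideal reduction is a map $\phi:L(\Re)\to L(\Re)\cup\{\emptyset\}$ with $\phi(N)\subseteq N$ and $N\subseteq M\Rightarrow\phi(N)\subseteq\phi(M)$. A hyperideal expansion is a map $\delta:L(\Re)\to L(\Re)$ with $N\subseteq\delta(N)$ and $N\subseteq M\Rightarrow\delta(N)\subseteq\delta(M)$. For $I\in L(\Re)\cup\{\emptyset\}$, $a\in\Re$ and a hyperideal $M$: $(I:a)=\{x: x\circ a\in I\}$, $(I:M)=\{x: x\circ m\in I\ \forall m\in M\}$. $K\circ L$ is the hyperideal generated by $\{k\circ l\}$. A proper hyperideal $N$ is $\phi$-$\delta$-primary if for all $a,b\in\Re$, $a\circ b\in N$ and $a\circ b\notin\phi(N)$ imply $a\in N$ or $b\in\delta(N)$. *)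

(* Defs.v *)
(* A commutative Krasner hyperring with identity.
   [hadd a b c] means c ∈ a ⊕ b. *)
Record KHyperring := {
  carrier :> Type;
  hadd : carrier -> carrier -> carrier -> Prop;
  hmul : carrier -> carrier -> carrier;
  hzero : carrier;
  hone : carrier;
  hneg : carrier -> carrier;
  hadd_nonempty : forall a b, exists c, hadd a b c;
  hadd_assoc : forall a b c x,
    (exists y, hadd a b y /\ hadd y c x) <-> (exists y, hadd b c y /\ hadd a y x);
  hadd_comm : forall a b x, hadd a b x <-> hadd b a x;
  hadd_zero : forall a x, hadd a hzero x <-> x = a;
  hadd_neg : forall a, hadd a (hneg a) hzero;
  hadd_neg_unique : forall a b, hadd a b hzero -> b = hneg a;
  hadd_rev : forall a b c, hadd a b c -> hadd c (hneg a) b /\ hadd c (hneg b) a;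
  hmul_assoc : forall a b c, hmul a (hmul b c) = hmul (hmul a b) c;
  hmul_comm : forall a b, hmul a b = hmul b a;
  hmul_one : forall a, hmul hone a = a;
  hone_neq_zero : hone <> hzero;
  hmul_zero : forall a, hmul a hzero = hzero;
  hmul_distr : forall a b c x,
    (exists y, hadd b c y /\ x = hmul a y) <-> hadd (hmul a b) (hmul a c) x
}.

Arguments hadd {_}.
Arguments hmul {_}.
Arguments hzero {_}.
Arguments hone {_}.
Arguments hneg {_}.

Section Hyperideals.
Variable R : KHyperring.

Definition hset := R -> Prop.

Definition hsubset (A B : hset) : Prop := forall x, A x -> B x.
Definition hseteq (A B : hset) : Prop := forall x, A x <-> B x.
Definition hempty (A : hset) : Prop := forall x, ~ A x.

Definition hyperideal (N : hset) : Prop :=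
  (exists x, N x) /\
  (forall a b x, N a -> N b -> hadd a (hneg b) x -> N x) /\
  (forall r a, N a -> N (hmul r a)).

Definition proper (N : hset) : Prop := exists x, ~ N x.

Definition hreduction (phi : hset -> hset) : Prop :=
  (forall N, hyperideal N -> hyperideal (phi N) \/ hempty (phi N)) /\
  (forall N, hyperideal N -> hsubset (phi N) N) /\
  (forall N M, hyperideal N -> hyperideal M -> hsubset N M ->
     hsubset (phi N) (phi M)).

Definition hexpansion (delta : hset -> hset) : Prop :=
  (forall N, hyperideal N -> hyperideal (delta N)) /\
  (forall N, hyperideal N -> hsubset N (delta N)) /\
  (forall N M, hyperideal N -> hyperideal M -> hsubset N M ->
     hsubset (delta N) (delta M)).

Definition hcolon (I : hset) (a : R) : hset := fun x => I (hmul x a).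
Definition hcolonI (I M : hset) : hset :=
  fun x => forall m, M m -> I (hmul x m).

Definition hprod (K L : hset) : hset :=
  fun x => forall I, hyperideal I ->
    (forall k l, K k -> L l -> I (hmul k l)) -> I x.

Definition phi_delta_primary (phi delta : hset -> hset) (N : hset) : Prop :=
  hyperideal N /\ proper N /\
  forall a b, N (hmul a b) -> ~ phi N (hmul a b) -> N a \/ delta N b.

End Hyperideals.

Arguments hsubset {R}.
Arguments hseteq {R}.
Arguments hempty {R}.
Arguments hyperideal {R}.
Arguments proper {R}.
Arguments hreduction {R}.
Arguments hexpansion {R}.
Arguments hcolon {R}.
Arguments hcolonI {R}.
Arguments hprod {R}.
Arguments phi_delta_primary {R}.

(* Main.v *)
Require Import Defs.
From Stdlib Require Import Classical.

Section H.
Variable R : KHyperring.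

Lemma negneg (x : R) : hneg (hneg x) = x.
Proof. symmetry. apply hadd_neg_unique. apply hadd_comm. apply hadd_neg. Qed.

Lemma I0 (I : hset R) : hyperideal I -> I hzero.
Proof.
  intros [[x Hx] [_ Hm]]. specialize (Hm hzero x Hx).
  rewrite hmul_comm, hmul_zero in Hm. exact Hm.
Qed.

Lemma Ineg (I : hset R) x : hyperideal I -> I x -> I (hneg x).
Proof.
  intros HI Hx. pose proof (I0 I HI) as H0. destruct HI as [_ [Hs _]].
  apply (Hs hzero x (hneg x) H0 Hx). apply hadd_comm, hadd_zero. reflexivity.
Qed.

Lemma Iadd (I : hset R) x y z : hyperideal I -> I x -> I y -> hadd x y z -> I z.
Proof.
  intros HI Hx Hy H. pose proof (Ineg I y HI Hy) as Hny. destruct HI as [_ [Hs _]].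
  apply (Hs x (hneg y) z Hx Hny). rewrite negneg. exact H.
Qed.

Lemma Isub (I : hset R) x y z : hyperideal I -> I x -> I z -> hadd x y z -> I y.
Proof.
  intros HI Hx Hz H. destruct (hadd_rev _ _ _ _ H) as [H1 _].
  destruct HI as [_ [Hs _]]. exact (Hs z x y Hz Hx H1).
Qed.

Lemma Imul (I : hset R) r a : hyperideal I -> I a -> I (hmul r a).
Proof. intros [_ [_ Hm]] Ha. auto. Qed.

Lemma Imul_r (I : hset R) a r : hyperideal I -> I a -> I (hmul a r).
Proof. intros HI Ha. rewrite hmul_comm. apply Imul; auto. Qed.

Lemma neg_mul (a b : R) : hmul a (hneg b) = hneg (hmul a b).
Proof.
  apply hadd_neg_unique. apply (proj1 (hmul_distr R a b (hneg b) hzero)).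
  exists hzero. split. apply hadd_neg. symmetry; apply hmul_zero.
Qed.

Lemma distr_r (a x y z : R) : hadd x y z -> hadd (hmul x a) (hmul y a) (hmul z a).
Proof.
  intro H. rewrite (hmul_comm R x a), (hmul_comm R y a), (hmul_comm R z a).
  apply (proj1 (hmul_distr R a x y _)). exists z; auto.
Qed.

Lemma distr_l (a x y z : R) : hadd x y z -> hadd (hmul a x) (hmul a y) (hmul a z).
Proof.
  intro H. apply (proj1 (hmul_distr R a x y _)). exists z; auto.
Qed.

Lemma swap (k r a : R) : hmul k (hmul r a) = hmul r (hmul k a).
Proof. rewrite !hmul_assoc, (hmul_comm R k r). reflexivity. Qed.

Lemma principal_ideal (b : R) : hyperideal (fun x => exists r, x = hmul r b).
Proof.
  split; [exists b, hone; symmetry; apply hmul_one |]. split.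
  - intros x y z [r ->] [s ->] H.
    rewrite (hmul_comm R s b), <- neg_mul, (hmul_comm R r b) in H.
    destruct (proj2 (hmul_distr R b r (hneg s) z) H) as [y [_ ->]].
    exists y. apply hmul_comm.
  - intros r x [s ->]. exists (hmul r s). apply hmul_assoc.
Qed.

Lemma pr_self (b : R) : exists r, b = hmul r b.
Proof. exists hone. symmetry. apply hmul_one. Qed.

Lemma colon_ideal (N : hset R) a : hyperideal N -> hyperideal (hcolon N a).
Proof.
  intros HN. split; [exists hzero; unfold hcolon; rewrite hmul_comm, hmul_zero; apply I0; auto|].
  split.
  - intros x y z Hx Hy H. unfold hcolon in *. apply (distr_r a) in H.
    rewrite (hmul_comm R (hneg y) a), neg_mul, (hmul_comm R a y) in H.
    apply (Iadd N (hmul x a) (hneg (hmul y a))); [exact HN | exact Hx | apply Ineg; [exact HN | exact Hy] | exact H].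
  - intros r x Hx. unfold hcolon in *. rewrite <- hmul_assoc. apply Imul; auto.
Qed.

Lemma colonI_ideal (N M : hset R) : hyperideal N -> hyperideal (hcolonI N M).
Proof.
  intros HN. split; [exists hzero; intros m _; rewrite hmul_comm, hmul_zero; apply I0; auto|].
  split.
  - intros x y z Hx Hy H m Hm.
    exact (proj1 (proj2 (colon_ideal N m HN)) x y z (Hx m Hm) (Hy m Hm) H).
  - intros r x Hx m Hm. exact (proj2 (proj2 (colon_ideal N m HN)) r x (Hx m Hm)).
Qed.

Lemma prod_in (K L : hset R) k l : K k -> L l -> hprod K L (hmul k l).
Proof. intros Hk Hl I _ H. apply H; auto. Qed.

Lemma all_phi phi delta (N K L : hset R) (Hphi : hreduction phi) (Hdelta : hexpansion delta)
  (HN : hyperideal N)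
  (Hi : forall a b, N (hmul a b) -> ~ phi N (hmul a b) -> N a \/ delta N b)
  (HK : hyperideal K) (HL : hyperideal L) k0 l0 (Hk0 : K k0) (Nk0 : ~ N k0)
  (Hl0 : L l0) (Dl0 : ~ delta N l0)
  (Hprod : forall k l, K k -> L l -> N (hmul k l)) :
  forall k l, K k -> L l -> phi N (hmul k l).
Proof.
  assert (HP : phi N (hmul k0 l0)).
  { apply NNPP; intro C; destruct (Hi _ _ (Hprod _ _ Hk0 Hl0) C); tauto. }
  assert (HPI : hyperideal (phi N)).
  { destruct Hphi as [H1 _]. destruct (H1 N HN) as [|E]; [auto| exfalso; exact (E _ HP)]. }
  assert (HD : hyperideal (delta N)) by (apply (proj1 Hdelta); auto).
  assert (A : forall l, L l -> ~ delta N l -> forall k, K k -> phi N (hmul k l)).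
  { intros l Hl Dl.
    assert (H0 : phi N (hmul k0 l)).
    { apply NNPP; intro C; destruct (Hi _ _ (Hprod _ _ Hk0 Hl) C); tauto. }
    intros k Hk. apply NNPP; intro C.
    destruct (Hi _ _ (Hprod _ _ Hk Hl) C) as [Nk|]; [|tauto].
    destruct (hadd_nonempty R k k0) as [z Hz].
    assert (Kz : K z) by exact (Iadd K k k0 z HK Hk Hk0 Hz).
    assert (Nz : ~ N z) by (intro; apply Nk0; exact (Isub N k k0 z HN Nk H Hz)).
    assert (Pz : phi N (hmul z l)).
    { apply NNPP; intro C'; destruct (Hi _ _ (Hprod _ _ Kz Hl) C'); tauto. }
    apply C. apply (distr_r l) in Hz. destruct (hadd_rev _ _ _ _ Hz) as [_ H2].
    apply (Iadd _ (hmul z l) (hneg (hmul k0 l))); try assumption; apply Ineg; assumption. }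
  intros k l Hk Hl. destruct (classic (delta N l)) as [Dl|Dl]; [|apply A; auto].
  destruct (hadd_nonempty R l l0) as [y Hy].
  assert (Ly : L y) by exact (Iadd L l l0 y HL Hl Hl0 Hy).
  assert (Dy : ~ delta N y) by (intro; apply Dl0; exact (Isub _ l l0 y HD Dl H Hy)).
  pose proof (A y Ly Dy k Hk) as Py. pose proof (A l0 Hl0 Dl0 k Hk) as P0.
  apply (distr_l k) in Hy. destruct (hadd_rev _ _ _ _ Hy) as [_ H2].
  apply (Iadd _ (hmul k y) (hneg (hmul k l0))); try assumption; apply Ineg; assumption.
Qed.

End H.

Theorem mainTheorem3 (R : KHyperring) (phi delta : hset R -> hset R) (N : hset R)
  (Hphi : hreduction phi) (Hdelta : hexpansion delta)
  (HN : hyperideal N) (HNp : proper N) :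
  let i := phi_delta_primary phi delta N in
  let ii := forall a : R, ~ delta N a ->
              hseteq (hcolon N a) (fun x => N x \/ hcolon (phi N) a x) in
  let iii := forall a : R, ~ delta N a ->
              hseteq (hcolon N a) N \/ hseteq (hcolon N a) (hcolon (phi N) a) in
  let iv := forall K L : hset R, hyperideal K -> hyperideal L ->
              hsubset (hprod K L) N -> ~ hsubset (hprod K L) (phi N) ->
              hsubset K N \/ hsubset L (delta N) in
  let v := forall M : hset R, hyperideal M -> ~ hsubset M (delta N) ->
              hseteq (hcolonI N M) N \/ hseteq (hcolonI N M) (hcolonI (phi N) M) in
  (i <-> ii) /\ (i <-> iii) /\ (i <-> iv) /\ (i <-> v).
Proof.
  cbv zeta.
  assert (Psub : hsubset (phi N) N) by (apply (proj1 (proj2 Hphi)); auto).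
  assert (HD : hyperideal (delta N)) by (apply (proj1 Hdelta); auto).
  assert (i_ii : phi_delta_primary phi delta N ->
     forall a : R, ~ delta N a ->
              hseteq (hcolon N a) (fun x => N x \/ hcolon (phi N) a x)).
  { intros [_ [_ Hi]] a Da x; unfold hcolon; split.
    - intro Hx. destruct (classic (phi N (hmul x a))) as [P|P]; [right; auto|].
      destruct (Hi _ _ Hx P); [left; auto | contradiction].
    - intros [Nx|Px]; [apply Imul_r; auto | apply Psub; auto]. }
  assert (ii_i : (forall a : R, ~ delta N a ->
              hseteq (hcolon N a) (fun x => N x \/ hcolon (phi N) a x)) ->
              phi_delta_primary phi delta N).
  { intros Hii. split; [auto|split; [auto|]]. intros a b Hab Hp.
    destruct (classic (delta N b)) as [D|D]; [right; auto|left].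
    destruct (Hii b D a) as [H1 _]. destruct (H1 Hab) as [|H2]; [auto|].
    exfalso; apply Hp; exact H2. }
  assert (i_iii : phi_delta_primary phi delta N ->
     forall a : R, ~ delta N a ->
              hseteq (hcolon N a) N \/ hseteq (hcolon N a) (hcolon (phi N) a)).
  { intros [_ [_ Hi]] a Da.
    destruct (classic (hsubset (hcolon N a) N)) as [S|S].
    - left. intro x; split; [apply S| intro Hx; unfold hcolon; apply Imul_r; [exact HN | exact Hx]].
    - right. unfold hsubset in S. destruct (not_all_ex_not _ _ S) as [k0 Hk0].
      apply imply_to_and in Hk0. destruct Hk0 as [Kk0 Nk0].
      assert (A := all_phi R phi delta N (hcolon N a) (fun x => exists r, x = hmul r a)
         Hphi Hdelta HN Hi (colon_ideal R N a HN) (principal_ideal R a) k0 a Kk0 Nk0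
         (pr_self R a) Da).
      assert (A' : forall k l, hcolon N a k -> (exists r, l = hmul r a) -> phi N (hmul k l)).
      { apply A. intros k l Hk [r ->]. rewrite swap. apply Imul; auto. }
      intro x; split; intro Hx.
      + exact (A' x a Hx (pr_self R a)).
      + apply Psub. exact Hx. }
  assert (iii_i : (forall a : R, ~ delta N a ->
              hseteq (hcolon N a) N \/ hseteq (hcolon N a) (hcolon (phi N) a)) ->
              phi_delta_primary phi delta N).
  { intros Hiii. split; [auto|split; [auto|]]. intros a b Hab Hp.
    destruct (classic (delta N b)) as [D|D]; [right; auto|left].
    destruct (Hiii b D) as [E|E].
    - exact (proj1 (E a) Hab).
    - exfalso; apply Hp. exact (proj1 (E a) Hab). }
  assert (i_iv : phi_delta_primary phi delta N ->
     forall K L : hset R, hyperideal K -> hyperideal L ->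
              hsubset (hprod K L) N -> ~ hsubset (hprod K L) (phi N) ->
              hsubset K N \/ hsubset L (delta N)).
  { intros [_ [_ Hi]] K L HK HL Hs Hns.
    destruct (classic (hsubset K N)) as [S|S]; [left; auto|].
    destruct (classic (hsubset L (delta N))) as [T|T]; [right; auto|].
    exfalso. unfold hsubset in S, T.
    destruct (not_all_ex_not _ _ S) as [k0 Hk0]. apply imply_to_and in Hk0.
    destruct (not_all_ex_not _ _ T) as [l0 Hl0]. apply imply_to_and in Hl0.
    destruct Hk0 as [Kk0 Nk0]. destruct Hl0 as [Ll0 Dl0].
    assert (A := all_phi R phi delta N K L Hphi Hdelta HN Hi HK HL k0 l0 Kk0 Nk0 Ll0 Dl0
      (fun k l Hk Hl => Hs _ (prod_in R K L k l Hk Hl))).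
    assert (HPI : hyperideal (phi N)).
    { destruct Hphi as [H1 _]. destruct (H1 N HN) as [|E]; [auto| exfalso; exact (E _ (A k0 l0 Kk0 Ll0))]. }
    apply Hns. intros x Hx. apply Hx; auto. }
  assert (iv_i : (forall K L : hset R, hyperideal K -> hyperideal L ->
              hsubset (hprod K L) N -> ~ hsubset (hprod K L) (phi N) ->
              hsubset K N \/ hsubset L (delta N)) -> phi_delta_primary phi delta N).
  { intros Hiv. split; [auto|split; [auto|]]. intros a b Hab Hp.
    destruct (Hiv _ _ (principal_ideal R a) (principal_ideal R b)) as [S|S].
    - intros x Hx. apply Hx; [exact HN|]. intros k l [r ->] [s ->].
      rewrite <- hmul_assoc, (swap R a s b). apply Imul; [exact HN|]. apply Imul; [exact HN|exact Hab].
    - intro S. apply Hp. apply S. apply prod_in; apply pr_self.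
    - left. apply S. apply pr_self.
    - right. apply S. apply pr_self. }
  assert (i_v : phi_delta_primary phi delta N ->
     forall M : hset R, hyperideal M -> ~ hsubset M (delta N) ->
              hseteq (hcolonI N M) N \/ hseteq (hcolonI N M) (hcolonI (phi N) M)).
  { intros [_ [_ Hi]] M HM HnM.
    destruct (classic (hsubset (hcolonI N M) N)) as [S|S].
    - left. intro x; split; [apply S| intros Nx m Hm; apply Imul_r; auto].
    - right. unfold hsubset in S, HnM.
      destruct (not_all_ex_not _ _ S) as [k0 Hk0]. apply imply_to_and in Hk0.
      destruct (not_all_ex_not _ _ HnM) as [l0 Hl0]. apply imply_to_and in Hl0.
      destruct Hk0 as [Kk0 Nk0]. destruct Hl0 as [Ll0 Dl0].
      assert (A := all_phi R phi delta N (hcolonI N M) M Hphi Hdelta HN Hi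
        (colonI_ideal R N M HN) HM k0 l0 Kk0 Nk0 Ll0 Dl0 (fun k l Hk Hl => Hk l Hl)).
      intro x; split.
      + intros Hx m Hm. apply A; auto.
      + intros Hx m Hm. apply Psub. apply Hx. exact Hm. }
  assert (v_i : (forall M : hset R, hyperideal M -> ~ hsubset M (delta N) ->
              hseteq (hcolonI N M) N \/ hseteq (hcolonI N M) (hcolonI (phi N) M)) ->
              phi_delta_primary phi delta N).
  { intros Hv. split; [auto|split; [auto|]]. intros a b Hab Hp.
    destruct (classic (delta N b)) as [D|D]; [right; auto|].
    assert (Ha : hcolonI N (fun x => exists r, x = hmul r b) a).
    { intros m [r ->]. rewrite swap. apply Imul; auto. }
    destruct (Hv _ (principal_ideal R b) (fun S => D (S b (pr_self R b)))) as [E|E].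
    - left. exact (proj1 (E a) Ha).
    - exfalso. apply Hp. exact (proj1 (E a) Ha b (pr_self R b)). }
  split; [split; [exact i_ii | exact ii_i]|]. split; [split; [exact i_iii | exact iii_i]|]. split; split; [exact i_iv | exact iv_i | exact i_v | exact v_i].
Qed.
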